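(* Fix $0<d<1$ and let $c(x)=x^d$. For every positive integer $h$ there exists a game with $n=h^2+h$ jobs and cost function $c$, and a Nash equilibrium $s$ of that game, such that $\frac{C(s)}{C(s^* )}=\Omega\!\left(h^{1-d}\right)=\Omega\!\left(n^{(1-d)/2}\right)$, where $s^*$ is an optimal assignment of that game.
   Context: A game is specified by a cost function $c$ (here $c(x)=x^d$, $c(0)=0$), a time horizon $T$ with slots $t=1,\dots,T$, and a set of jobs, each job $j$ having integer release time $r_j$ and integer deadline $d_j$ with $0<r_j<d_j<T$. An assignment $s$ gives each job $j$ a slot $s_j$ with $r_j\le s_j<d_j$. The load of slot $t$ is $l_t(s)=|\{j:s_j=t\}|$ and $C(s)=\sum_{t=1}^T c(l_t(s))$. An assignment $s$ is a Nash equilibrium if for every job $j$ and every slot $t\neq s_j$ with $r_j\le t<d_j$: $\frac{c(l_{s_j}(s))}{l_{s_j}(s)}\le\frac{c(l_t(s)+1)}{l_t(s)+1}$. An optimal assignment is one minimizing $C$ over all assignments. *)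

(* Defs.v *)
From Stdlib Require Import Reals Lra Lia Arith.
Open Scope R_scope.

(* A game: time horizon T (slots 1..T), njobs jobs indexed 0..njobs-1,
   job j has release time rel j and deadline dl j. *)
Record game := Game { horizon : nat; njobs : nat; rel : nat -> nat; dl : nat -> nat }.

Definition well_formed (g : game) : Prop :=
  forall j, (j < njobs g)%nat ->
    (0 < rel g j)%nat /\ (rel g j < dl g j)%nat /\ (dl g j < horizon g)%nat.

Definition cost (d : R) (k : nat) : R :=
  match k with O => 0 | _ => Rpower (INR k) d end.

Definition assignment := nat -> nat.

Definition valid (g : game) (s : assignment) : Prop :=
  forall j, (j < njobs g)%nat -> (rel g j <= s j)%nat /\ (s j < dl g j)%nat.

Fixpoint count_slot (s : assignment) (t : nat) (n : nat) : nat :=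
  match n with
  | O => O
  | S m => (if Nat.eqb (s m) t then 1 else 0) + count_slot s t m
  end%nat.

Definition load (g : game) (s : assignment) (t : nat) : nat :=
  count_slot s t (njobs g).

Fixpoint sum_slots (f : nat -> R) (T : nat) : R :=
  match T with O => 0 | S m => f (S m) + sum_slots f m end.

Definition total_cost (d : R) (g : game) (s : assignment) : R :=
  sum_slots (fun t => cost d (load g s t)) (horizon g).

Definition nash (d : R) (g : game) (s : assignment) : Prop :=
  valid g s /\
  forall j t, (j < njobs g)%nat -> t <> s j ->
    (rel g j <= t)%nat -> (t < dl g j)%nat ->
    cost d (load g s (s j)) / INR (load g s (s j))
      <= cost d (S (load g s t)) / INR (S (load g s t)).

Definition optimal (d : R) (g : game) (s : assignment) : Prop :=
  valid g s /\ forall s', valid g s' -> total_cost d g s <= total_cost d g s'.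

(* Main.v *)
Require Import Defs.
From Stdlib Require Import Reals.
From Stdlib Require Import Lra Lia Arith Psatz.
Open Scope R_scope.

Lemma expl x y : x <= y -> exp x <= exp y.
Proof. intros [H|H]. left; apply exp_increasing; auto. subst; lra. Qed.

Lemma lnl x y : 0 < x -> x <= y -> ln x <= ln y.
Proof. intros H [H1|H1]. left; apply ln_increasing; auto. subst; lra. Qed.

Fixpoint lv (j fuel k : nat) : nat :=
  match fuel with
  | O => k
  | S f => if Nat.ltb j (k * (k + 1)) then k else lv j f (S k)
  end.

Definition lvl j := lv j (S j) 1.

Lemma lv_spec j : forall fuel k, (1 <= k)%nat -> (k * (k - 1) <= j)%nat ->
  (j < (k + fuel) * (k + fuel + 1))%nat ->
  let L := lv j fuel k in (1 <= L /\ L * (L - 1) <= j /\ j < L * (L + 1))%nat.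
Proof.
  induction fuel; intros k H1 H2 H3; simpl.
  - rewrite Nat.add_0_r in H3; lia.
  - destruct (Nat.ltb_spec j (k * (k + 1))). lia.
    apply IHfuel. lia. replace (S k - 1)%nat with k by lia. nia.
    replace (S k + fuel)%nat with (k + S fuel)%nat by lia. lia.
Qed.

Lemma lvl_spec j : (1 <= lvl j /\ lvl j * (lvl j - 1) <= j /\ j < lvl j * (lvl j + 1))%nat.
Proof. apply lv_spec; nia. Qed.

Lemma lvl_uniq j k : (1 <= k)%nat -> (k * (k - 1) <= j)%nat -> (j < k * (k + 1))%nat ->
  lvl j = k.
Proof.
  intros H1 H2 H3. destruct (lvl_spec j) as (A & B & C).
  destruct (Nat.lt_total (lvl j) k) as [H|[H|H]]; auto.
  - exfalso. assert (lvl j * (lvl j + 1) <= (k - 1) * k)%nat.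
    { apply Nat.mul_le_mono; lia. } rewrite (Nat.mul_comm (k-1)) in H0. lia.
  - exfalso. assert ((k + 1) * k <= lvl j * (lvl j - 1))%nat.
    { apply Nat.mul_le_mono; lia. } rewrite (Nat.mul_comm (k+1)) in H0. lia.
Qed.

Lemma count_add s t a b :
  count_slot s t (a + b) = (count_slot s t a + count_slot (fun i => s (a + i)%nat) t b)%nat.
Proof.
  induction b. rewrite Nat.add_0_r; simpl; lia. rewrite Nat.add_succ_r. simpl. rewrite IHb. lia.
Qed.

Lemma count_const f t v b : (forall i, (i < b)%nat -> f i = v) ->
  count_slot f t b = if Nat.eqb v t then b else 0%nat.
Proof.
  induction b; intros H; simpl. destruct (Nat.eqb v t); auto.
  rewrite IHb by (intros; apply H; lia). rewrite H by lia.
  destruct (Nat.eqb v t); lia.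
Qed.

Definition sN (j : nat) : nat := S (lvl j).

Lemma count_sN t k : count_slot sN t (k * (k + 1)) =
  if andb (Nat.leb 2 t) (Nat.leb t (S k)) then (2 * (t - 1))%nat else 0%nat.
Proof.
  induction k.
  - simpl. destruct t as [|[|t]]; reflexivity.
  - replace (S k * (S k + 1))%nat with (k * (k + 1) + 2 * (S k))%nat by nia.
    rewrite count_add, IHk.
    rewrite (count_const _ t (S (S k))).
    2:{ intros i Hi. unfold sN. f_equal. apply lvl_uniq; nia. }
    destruct (Nat.leb_spec 2 t); destruct (Nat.leb_spec t (S k));
    destruct (Nat.leb_spec t (S (S k))); destruct (Nat.eqb_spec (S (S k)) t); simpl; lia.
Qed.

Lemma count_le s t n : (count_slot s t n <= n)%nat.
Proof. induction n; simpl. lia. destruct (Nat.eqb (s n) t); lia. Qed.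

Lemma sum_slots_ext f g T : (forall t, (1 <= t <= T)%nat -> f t = g t) ->
  sum_slots f T = sum_slots g T.
Proof. induction T; intros H; simpl. auto. rewrite H by lia. rewrite IHT; auto. intros; apply H; lia. Qed.

Lemma sum_slots_le f g T : (forall t, (1 <= t <= T)%nat -> f t <= g t) ->
  sum_slots f T <= sum_slots g T.
Proof. induction T; intros H; simpl. lra. assert (f (S T) <= g (S T)) by (apply H; lia).
  assert (sum_slots f T <= sum_slots g T) by (apply IHT; intros; apply H; lia). lra. Qed.

Lemma sum_slots_add f g T : sum_slots (fun t => f t + g t) T = sum_slots f T + sum_slots g T.
Proof. induction T; simpl. lra. rewrite IHT; lra. Qed.

Lemma sum_slots_scal c f T : sum_slots (fun t => c * f t) T = c * sum_slots f T.
Proof. induction T; simpl. lra. rewrite IHT; lra. Qed.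

Lemma sum_slots_ind v T : (1 <= v <= T)%nat ->
  sum_slots (fun t => if Nat.eqb v t then 1 else 0) T = 1.
Proof.
  induction T; intros H; simpl. lia.
  destruct (Nat.eqb_spec v (S T)).
  - subst. rewrite (sum_slots_ext _ (fun _ => 0)). clear. induction T; simpl; lra.
    intros t Ht. destruct (Nat.eqb_spec (S T) t); [lia|auto].
  - rewrite IHT by lia. lra.
Qed.

Lemma sum_count s T n : (forall j, (j < n)%nat -> (1 <= s j <= T)%nat) ->
  sum_slots (fun t => INR (count_slot s t n)) T = INR n.
Proof.
  induction n; intros H.
  - simpl. clear. induction T; simpl; lra.
  - cbn [count_slot]. rewrite (sum_slots_ext _ (fun t => (if Nat.eqb (s n) t then 1 else 0) + INR (count_slot s t n))).
    rewrite sum_slots_add, IHn, sum_slots_ind. rewrite S_INR; lra.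
    apply H; lia. intros; apply H; lia.
    intros t _. rewrite plus_INR. destruct (Nat.eqb (s n) t); simpl; lra.
Qed.

Lemma cost_lb d x M : 0 < d < 1 -> (x <= M)%nat ->
  INR x * Rpower (INR M) (d - 1) <= cost d x.
Proof.
  intros Hd H. destruct x as [|x]. simpl. lra.
  unfold cost, Rpower.
  assert (Hx : 0 < INR (S x)) by (apply lt_0_INR; lia).
  assert (HM : INR (S x) <= INR M) by (apply le_INR; lia).
  pose proof (lnl _ _ Hx HM).
  rewrite <- (exp_ln (INR (S x))) at 1 by auto. rewrite <- exp_plus.
  apply expl. nra.
Qed.

Lemma cost_ge0 d x : 0 <= cost d x.
Proof. destruct x; simpl. lra. unfold Rpower. left; apply exp_pos. Qed.

Lemma total_lb d g s M : 0 < d < 1 ->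
  (forall j, (j < njobs g)%nat -> (1 <= s j <= horizon g)%nat) ->
  (forall t, (load g s t <= M)%nat) ->
  INR (njobs g) * Rpower (INR M) (d - 1) <= total_cost d g s.
Proof.
  intros Hd Hs HM. unfold total_cost.
  rewrite <- (sum_count s (horizon g) (njobs g)) by auto.
  rewrite Rmult_comm, <- sum_slots_scal.
  apply sum_slots_le. intros t _. rewrite Rmult_comm. apply cost_lb; auto.
Qed.

Lemma ratio_cost d x : (1 <= x)%nat -> cost d x / INR x = exp ((d - 1) * ln (INR x)).
Proof.
  intros H. destruct x. lia. unfold cost, Rpower.
  assert (Hx : 0 < INR (S x)) by (apply lt_0_INR; lia).
  replace ((d - 1) * ln (INR (S x))) with (d * ln (INR (S x)) + - ln (INR (S x))) by ring.
  rewrite exp_plus, exp_Ropp, exp_ln by auto. unfold Rdiv. auto.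
Qed.

Theorem lemma2 (d : R) (Hd : 0 < d < 1) :
  exists K : R, 0 < K /\
    forall h : nat, (1 <= h)%nat ->
      exists (g : game) (s : assignment),
        well_formed g /\ njobs g = (h * h + h)%nat /\ nash d g s /\
        forall s' : assignment, optimal d g s' ->
          total_cost d g s / total_cost d g s' >= K * Rpower (INR h) (1 - d).
Proof.
  exists (exp ((d - 1) * ln 2)). split. apply exp_pos.
  intros h Hh.
  set (g := Game (h + 3) (h * h + h) (fun _ => 1%nat) (fun j => (lvl j + 2)%nat)).
  assert (Hlv : forall j, (j < h * h + h)%nat -> (1 <= lvl j <= h)%nat).
  { intros j Hj. destruct (lvl_spec j) as (A & B & C). split; auto.
    destruct (Nat.le_gt_cases (lvl j) h); auto. exfalso.
    assert ((h + 1) * h <= lvl j * (lvl j - 1))%nat by (apply Nat.mul_le_mono; lia). nia. }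
  assert (Hload : forall t, load g sN t =
     if andb (Nat.leb 2 t) (Nat.leb t (S h)) then (2 * (t - 1))%nat else 0%nat).
  { intros t. unfold load. simpl. replace (h * h + h)%nat with (h * (h + 1))%nat by nia.
    apply count_sN. }
  exists g, sN. split; [|split; [reflexivity|split]].
  - intros j Hj. simpl in *. pose proof (Hlv j Hj). lia.
  - split.
    + intros j Hj. simpl in *. unfold sN. lia.
    + intros j t Hj Ht H1 H2. cbn [g njobs rel dl] in Hj, H1, H2. pose proof (Hlv j Hj).
      unfold sN in *. rewrite !Hload.
      destruct (Nat.leb_spec 2 (S (lvl j))); [|lia].
      destruct (Nat.leb_spec (S (lvl j)) (S h)); [|lia]. cbn [andb].
      set (m := (if andb (Nat.leb 2 t) (Nat.leb t (S h)) then (2 * (t - 1))%nat else 0%nat)).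
      assert (Hm : (m <= 2 * (lvl j - 1))%nat).
      { unfold m. destruct (Nat.leb_spec 2 t); destruct (Nat.leb_spec t (S h)); simpl; lia. }
      rewrite !ratio_cost by lia.
      apply expl. 
      assert (ln (INR (S m)) <= ln (INR (2 * (S (lvl j) - 1)))).
      { apply lnl. apply lt_0_INR; lia. apply le_INR; lia. }
      nra.
  - intros s' [Hv Hopt].
    set (s0 := fun _ : nat => 1%nat).
    assert (Hv0 : valid g s0). { intros j Hj; simpl. unfold s0. pose proof (Hlv j Hj). lia. }
    pose proof (Hopt s0 Hv0) as Hle.
    set (n := (h * h + h)%nat).
    assert (Hn : 0 < INR n) by (apply lt_0_INR; unfold n; nia).
    assert (Hpos : 0 < total_cost d g s').
    { eapply Rlt_le_trans; [|apply (total_lb d g s' n Hd)].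
      - apply Rmult_lt_0_compat. simpl; auto. unfold Rpower; apply exp_pos.
      - intros j Hj. destruct (Hv j Hj). simpl in *. pose proof (Hlv j Hj). lia.
      - intros t. apply count_le. }
    assert (Hc0 : total_cost d g s0 = cost d n).
    { unfold total_cost. simpl.
      rewrite (sum_slots_ext _ (fun t => if Nat.eqb 1 t then cost d n else 0)).
      2:{ intros t _. unfold load. simpl. rewrite (count_const _ t 1) by auto.
          destruct t as [|[|t]]; reflexivity. }
      rewrite (sum_slots_ext _ (fun t => cost d n * (if Nat.eqb 1 t then 1 else 0))).
      rewrite sum_slots_scal, sum_slots_ind by lia. fold n. ring.
      intros t _. destruct (Nat.eqb 1 t); ring. }
    assert (HsN : INR n * Rpower (INR (2 * h)) (d - 1) <= total_cost d g sN).
    { apply (total_lb d g sN (2 * h) Hd).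
      - intros j Hj. simpl in *. unfold sN. pose proof (Hlv j Hj). lia.
      - intros t. rewrite Hload. destruct (Nat.leb_spec 2 t); destruct (Nat.leb_spec t (S h)); simpl; lia. }
    assert (Hr : total_cost d g sN / total_cost d g s' >= total_cost d g sN / cost d n).
    { rewrite <- Hc0. apply Rle_ge. apply Rmult_le_compat_l.
      eapply Rle_trans; [|apply HsN]. left; apply Rmult_lt_0_compat; auto. unfold Rpower; apply exp_pos.
      apply Rinv_le_contravar; auto. }
    apply Rge_trans with (1 := Hr). apply Rle_ge.
    assert (Hh0 : 0 < INR h) by (apply lt_0_INR; lia).
    assert (Hh1 : 0 < INR (S h)) by (apply lt_0_INR; lia).
    assert (En : INR n = INR h * INR (S h)) by (unfold n; rewrite <- mult_INR; f_equal; lia).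
    assert (E2 : INR (2 * h) = 2 * INR h) by (rewrite mult_INR; simpl; lra).
    assert (Hcn : cost d n = exp (d * (ln (INR h) + ln (INR (S h))))).
    { assert (Hn2 : n = S (n - 1)) by (unfold n; nia). unfold cost. rewrite Hn2. unfold Rpower. rewrite <- Hn2.
      rewrite En, ln_mult; auto. }
    apply Rle_trans with (INR n * Rpower (INR (2 * h)) (d - 1) / cost d n).
    2:{ apply Rmult_le_compat_r; auto. left; apply Rinv_0_lt_compat. rewrite Hcn; apply exp_pos. }
    rewrite Hcn. unfold Rpower. rewrite E2, En, ln_mult by lra.
    rewrite <- (exp_ln (INR h * INR (S h))) by nra. rewrite ln_mult by lra.
    unfold Rdiv. rewrite <- exp_Ropp, <- !exp_plus. apply expl.
    assert (ln (INR h) <= ln (INR (S h))) by (apply lnl; auto; apply le_INR; lia).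
    nra.
Qed.
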